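(* Let $t\ge1$, $k\ge t+1$, $v\ge 2$. If an OA$(t+1,k+1,v)$ exists, then a simple COA$_\lambda(t,k+t-1,v)$ exists for every positive integer $\lambda\le v$.
   Context: An OA$_\lambda(t,k,v)$ is a $\lambda v^t\times k$ array over a $v$-set $V$ such that every $t$ columns contain every $t$-tuple exactly $\lambda$ times; OA$(t,k,v)$ means $\lambda=1$. A COA$_\lambda(t,k,v)$ is a $\lambda v^t\times k$ array over $V$ in which every set of $t$ consecutive columns contains every $t$-tuple exactly $\lambda$ times. It is simple if for any two distinct sets of $t$ consecutive columns sharing exactly $i$ columns ($0\le i\le t-1$), the subarray on the $2t-i$ columns of their union contains each $(2t-i)$-tuple at most once. *)

(* Defs.v *)
From mathcomp Require Import all_boot.
Unset Implicit Arguments. Unset Printing Implicit Defensive.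

Definition array (N k v : nat) := 'I_N -> 'I_k -> 'I_v.

Definition is_OA (lam t k v : nat) (A : array (lam * v ^ t) k v) : Prop :=
  forall c : 'I_t -> 'I_k, injective c ->
  forall x : 'I_t -> 'I_v,
    #|[set r | [forall j : 'I_t, A r (c j) == x j]]| = lam.

Definition OA_exists (t k v : nat) : Prop :=
  exists A : array (1 * v ^ t) k v, is_OA 1 t k v A.

Definition window_match (N t k v : nat) (A : array N k v) (i : nat)
  (r : 'I_N) (x : 'I_t -> 'I_v) : bool :=
  [forall j : 'I_t, forall c : 'I_k, (val c == i + j) ==> (A r c == x j)].

Definition is_COA (lam t k v : nat) (A : array (lam * v ^ t) k v) : Prop :=
  forall i : nat, i + t <= k ->
  forall x : 'I_t -> 'I_v,
    #|[set r | window_match (lam * v ^ t) t k v A i r x]| = lam.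

Definition in_window (t : nat) (i : nat) (k : nat) (c : 'I_k) : bool :=
  (i <= c) && (c < i + t).

(* Simple: for any two distinct windows (they then share exactly some
   i columns, 0 <= i <= t-1), the subarray on the union of their columns
   contains each tuple at most once, i.e. no two distinct rows agree on all
   columns of the union. *)
Definition is_simple_COA (lam t k v : nat) (A : array (lam * v ^ t) k v) : Prop :=
  forall a b : nat, a + t <= k -> b + t <= k -> a != b ->
  forall r1 r2 : 'I_(lam * v ^ t), r1 != r2 ->
  exists c : 'I_k, (in_window t a k c || in_window t b k c) && (A r1 c != A r2 c).

(* Main.v *)
Require Import Defs.
From mathcomp Require Import all_boot.
From mathcomp Require Import zify.

Lemma card_part (T J : finType) (P : pred T) (g : T -> J) :
  #|[set y | P y]| = \sum_(j : J) #|[set y | P y && (g y == j)]|.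
Proof.
rewrite -sum1_card (partition_big g xpredT) //=.
apply: eq_bigr => j _; rewrite -sum1_card; apply: eq_bigl => y; by rewrite !inE.
Qed.

Lemma oa_unique t k v (B : array (1 * v ^ t.+1) k.+1 v) :
  is_OA 1 t.+1 k.+1 v B -> forall c : 'I_t.+1 -> 'I_k.+1, injective c ->
  forall y1 y2, (forall j, B y1 (c j) = B y2 (c j)) -> y1 = y2.
Proof.
move=> HB c Hc y1 y2 H.
have /eqP/cards1P [y0 Hy0] := HB c Hc (fun j => B y1 (c j)).
have H1 : y1 \in [set r | [forall j, B r (c j) == B y1 (c j)]].
  by rewrite inE; apply/forallP.
have H2 : y2 \in [set r | [forall j, B r (c j) == B y1 (c j)]].
  by rewrite inE; apply/forallP => j; rewrite H.
by move: H1 H2; rewrite Hy0 !inE => /eqP -> /eqP ->.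
Qed.

Lemma oa_count t k v (B : array (1 * v ^ t.+1) k.+1 v) lam :
  is_OA 1 t.+1 k.+1 v B -> lam <= v ->
  forall cw : 'I_t -> 'I_k.+1, injective cw -> (forall j, cw j != ord0) ->
  forall x : 'I_t -> 'I_v,
  #|[set y | (B y ord0 < lam) && [forall j, B y (cw j) == x j]]| = lam.
Proof.
move=> HB Hlv cw Hcw H0 x.
rewrite (card_part _ _ _ (fun y : 'I_(1 * v ^ t.+1) => B y ord0)).
rewrite (bigID (fun s : 'I_v => s < lam)) /=.
rewrite [X in _ + X]big1 ?addn0; last first.
  move=> s Hs; apply/eqP; rewrite cards_eq0; apply/eqP/setP => y; rewrite !inE.
  apply/negbTE; apply/negP => /andP [/andP [Hl _] /eqP Hy]; by rewrite -Hy Hl in Hs.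
rewrite (eq_bigr (fun _ => 1)) => [|s Hs].
  have := big_ord_widen (op := addn) (idx := 0) v (fun _ => 1) Hlv.
  rewrite /= => <-. by rewrite sum1_card card_ord.
pose c' := fun j : 'I_t.+1 => if unlift ord0 j is Some j' then cw j' else ord0.
pose x' := fun j : 'I_t.+1 => if unlift ord0 j is Some j' then x j' else s.
have Hc' : injective c'.
  move=> i1 i2; rewrite /c'.
  case: unliftP => [j1 ->|->]; case: unliftP => [j2 ->|->] //.
  - by move/Hcw ->.
  - by move=> E; move: (H0 j1); rewrite E eqxx.
  - by move=> E; move: (H0 j2); rewrite -E eqxx.
apply: (etrans _ (HB c' Hc' x')); apply: eq_card => y; rewrite !inE.
apply/idP/idP.
- case/andP => /andP [_ /forallP H] /eqP Hs0; apply/forallP => j; rewrite /c' /x'.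
  by case: unliftP => [j' _|_]; [apply: H | rewrite Hs0].
- move/forallP => H.
  have Hy0 := H ord0; rewrite /c' /x' unlift_none in Hy0.
  move/eqP: Hy0 => Hy0; rewrite Hy0 Hs eqxx andbT /=.
  apply/forallP => j; have := H (lift ord0 j); by rewrite /c' /x' liftK.
Qed.

Definition colf (k p : nat) := if p < k then p else p - k.

Lemma colf_lt k p : p < k + k -> colf k p < k.
Proof. rewrite /colf; case: ifP; lia. Qed.

Lemma colf_eq k x y : x < k + k -> y < k + k -> colf k x = colf k y ->
  x = y \/ x = y + k \/ y = x + k.
Proof. rewrite /colf; case: ifP; case: ifP; lia. Qed.

Lemma bij_count (T : finType) (S : {set T}) n (HS : #|S| = n) (P : pred T) :
  #|[set r : 'I_n | P (enum_val (cast_ord (esym HS) r))]| = #|[set y | (y \in S) && P y]|.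
Proof.
have finj : injective (fun r : 'I_n => enum_val (cast_ord (esym HS) r)).
  by move=> r1 r2 /enum_val_inj /cast_ord_inj.
rewrite -(card_imset _ finj); apply: eq_card => y; rewrite inE.
apply/imsetP/andP.
- by case=> r; rewrite inE => Hr ->; split => //; apply: enum_valP.
- case=> Hy HP; exists (cast_ord HS (enum_rank_in Hy y)); last first.
    by rewrite cast_ordK enum_rankK_in.
  by rewrite inE cast_ordK enum_rankK_in.
Qed.

Lemma wm_eq N t K v (A : array N K v) i r x (F : nat -> 'I_v) :
  i + t <= K -> (forall c : 'I_K, A r c = F c) ->
  window_match N t K v A i r x = [forall j : 'I_t, F (i + j) == x j].
Proof.
move=> Hi HA; apply/forallP/forallP => H j.
- have Hc : i + j < K by have := ltn_ord j; lia.
  by move/forallP: (H j) => /(_ (Ordinal Hc)); rewrite eqxx /= HA.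
- apply/forallP => c; apply/implyP => /eqP Hc; by rewrite HA Hc.
Qed.

Lemma cw_ok t k i : t + 1 <= k -> i + t <= k + t - 1 ->
  injective (fun j : 'I_t => (inord (colf k (i + j)).+1 : 'I_k.+1)) /\
  (forall j : 'I_t, (inord (colf k (i + j)).+1 : 'I_k.+1) != ord0).
Proof.
move=> Htk Hi.
have Hb : forall j : 'I_t, colf k (i + j) < k.
  move=> j; apply: colf_lt; have := ltn_ord j; lia.
split.
- move=> j1 j2 /(congr1 (@nat_of_ord _)); rewrite !inordK ?ltnS ?Hb //.
  move/succn_inj/colf_eq; have := ltn_ord j1; have := ltn_ord j2 => h1 h2 H.
  apply: val_inj => /=; have := H ltac:(lia) ltac:(lia); lia.
- move=> j; apply/eqP => /(congr1 (@nat_of_ord _)); rewrite inordK ?ltnS ?Hb //.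
Qed.

Theorem mainTheorem6 (t k v : nat) :
  1 <= t -> t + 1 <= k -> 2 <= v ->
  OA_exists t.+1 k.+1 v ->
  forall lam : nat, 0 < lam -> lam <= v ->
  exists A : array (lam * v ^ t) (k + t - 1) v,
    is_COA lam t (k + t - 1) v A /\ is_simple_COA lam t (k + t - 1) v A.
Proof.
move=> Ht Htk Hv [B HB] lam Hlam Hlv.
pose S := [set y : 'I_(1 * v ^ t.+1) | B y ord0 < lam].
have HS : #|S| = lam * v ^ t.
  have [Hinj H0] := cw_ok t k 0 Htk ltac:(lia).
  rewrite /S (card_part _ _ (fun y => B y ord0 < lam)
     (fun y => [ffun j : 'I_t => B y (inord (colf k (0 + j)).+1)])).
  rewrite (eq_bigr (fun _ => lam)); last first.
    move=> x _; apply: etrans (oa_count t k v B lam HB Hlv _ Hinj H0 x).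
    apply: eq_card => y; rewrite !inE; congr (_ && _).
    apply/eqP/forallP => [<- j|H]; first by rewrite ffunE.
    by apply/ffunP => j; rewrite ffunE; apply/eqP/H.
  by rewrite sum_nat_const card_ffun !card_ord mulnC.
pose f := fun r : 'I_(lam * v ^ t) => enum_val (cast_ord (esym HS) r).
pose A := fun (r : 'I_(lam * v ^ t)) (c : 'I_(k + t - 1)) =>
  B (f r) (inord (colf k c).+1).
exists A; split.
- move=> i Hi x.
  have -> : [set r | window_match _ t _ v A i r x] =
     [set r | [forall j : 'I_t, B (f r) (inord (colf k (i + j)).+1) == x j]].
    apply/setP => r; rewrite !inE.
    by rewrite (wm_eq _ _ _ _ _ _ _ _ (fun p => B (f r) (inord (colf k p).+1))).
  rewrite (bij_count _ S _ HS (fun y => [forall j : 'I_t, B y (inord (colf k (i + j)).+1) == x j])).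
  have [Hinj H0] := cw_ok t k i Htk Hi.
  apply: etrans (oa_count t k v B lam HB Hlv _ Hinj H0 x).
  by apply: eq_card => y; rewrite !inE.
- move=> a b Ha Hb Hab r1 r2 Hr.
  wlog Hlt : a b Ha Hb Hab / a < b.
    move=> Hw; case: (ltngtP a b) => [h|h|h]; first exact: Hw.
    - have [|c Hc] := Hw b a Hb Ha _ h; first by rewrite eq_sym.
      by exists c; rewrite orbC.
    - by rewrite h eqxx in Hab.
  case: (boolP [exists c, (in_window t a (k + t - 1) c || in_window t b (k + t - 1) c) && (A r1 c != A r2 c)]) => [/existsP //|/existsPn H].
  exfalso; move/negP: Hr; apply.
  have Hag : forall c : 'I_(k + t - 1), in_window t a (k + t - 1) c || in_window t b (k + t - 1) c -> A r1 c = A r2 c.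
    by move=> c Hc; move: (H c); rewrite Hc /= negbK => /eqP.
  pose p := fun j : 'I_t.+1 => if j < t then a + j else if b < a + t then a + t else b.
  have Hp : forall j, p j < k + t - 1.
    by move=> j; rewrite /p; have := ltn_ord j; case E1: (j < t); case E3: (b < a + t); lia.
  have Hp2 : forall j, p j < k + k.
    by move=> j; have := Hp j; lia.
  have Hw : forall j, in_window t a (k + t - 1) (Ordinal (Hp j)) || in_window t b (k + t - 1) (Ordinal (Hp j)).
    move=> j; rewrite /in_window /= /p; have := ltn_ord j.
    case E1: (j < t); [|case E3: (b < a + t)] => ?;
      apply/orP; [left|right|right]; apply/andP; split; lia.
  pose c := fun j => (inord (colf k (p j)).+1 : 'I_k.+1).
  have Hc : injective c.
    move=> i j; rewrite /c => /(congr1 (@nat_of_ord _)).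
    rewrite !inordK ?ltnS ?colf_lt ?Hp2 //.
    move/succn_inj/colf_eq => /(_ (Hp2 i) (Hp2 j)) H2.
    apply: val_inj => /=; move: H2; have := ltn_ord i; have := ltn_ord j.
    rewrite /p; case E1: (i < t); case E2: (j < t); case E3: (b < a + t); lia.
  have := oa_unique t k v B HB c Hc (f r1) (f r2) (fun j => Hag _ (Hw j)).
  by move=> /enum_val_inj /cast_ord_inj ->.
Qed.
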